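(* Let $q$ be a prime power, $r\mid(q-1)$ with $r\ge 3$, and $q/2\le\ell\le q-1$. The quantum Tamo–Barg code $\mathrm{CSS}(C,C)$ with parameters $q,r,\ell$ is a quantum locally recoverable code with locality $r$.
   Context: $[n]=\{0,\dots,n-1\}$, $\mathbb{F}_q^*=\mathbb{F}_q\setminus\{0\}$. For $S\subseteq\mathbb{Z}_{\ge0}$, $\mathbb{F}_q[X]^S=\{\sum_{i\in S}a_iX^i\}$, $\mathrm{ev}(f)=(f(x))_{x\in\mathbb{F}_q^*}$. Let $S=\{i\in[\ell]:i\not\equiv r-1\pmod r\}\cup\{i\in[q-1]:i\equiv1\pmod r\}$, $C=\mathrm{ev}(\mathbb{F}_q[X]^S)$; for $\ell\ge q/2$, $C^\perp\subseteq C$ and the quantum Tamo–Barg code is $\mathrm{CSS}(C,C)=\mathrm{span}\{\sum_{y\in C^\perp}|x+y\rangle:x\in C\}\subseteq(\mathbb{C}^q)^{\otimes(q-1)}$, with qudits indexed by $\mathbb{F}_q^*$. A quantum code $\mathcal{C}$ on qudit set $Q$ is locally recoverable with locality $r$ if for each $i\in Q$ there is $I_i\subseteq Q$ with $i\in I_i$, $|I_i|\le r$, and a quantum channel $\mathrm{Rec}_i$ from the qudits $I_i\setminus\{i\}$ to the qudits $I_i$ such that $(\mathrm{Rec}_i\otimes\mathrm{id})(\psi_{Q\setminus\{i\}})=\psi$ for every code state $\psi$ (here $\psi_B$ is the reduced density matrix on $B$). *)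

(* Defs.v *)
From HB Require Import structures.
From mathcomp Require Import all_boot all_order all_algebra all_field.
Set Implicit Arguments. Unset Strict Implicit. Unset Printing Implicit Defensive.
Import Order.TTheory GRing.Theory Num.Theory.
Local Open Scope ring_scope.

(* Qd : the set of qudits; A : the computational basis of one qudit    *)
(* (so each qudit is C^|A|).  a0 : an arbitrary default symbol, only   *)
(* used to make the gluing functions total (never used in the cases    *)
(* where the glued sets cover the target set).                         *)
(* A (unnormalised) vector of the full space is a function             *)
(* {ffun Qd -> A} -> algC (its coordinates in the computational basis);*)
(* an operator on the full space is given by its matrix entries        *)
(* <x|rho|y>.                                                          *)
Section Qudits.
Variables (Qd A : finType) (a0 : A).

Definition word := {ffun Qd -> A}.

Definition conf (S : {set Qd}) := {ffun {u : Qd | u \in S} -> A}.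

Definition ext (S : {set Qd}) (x : conf S) (u : Qd) : A :=
  if (insub u : option {v : Qd | v \in S}) is Some u' then x u' else a0.

Definition merge (S T : {set Qd}) (x : conf S) (y : conf T) (u : Qd) : A :=
  if u \in S then ext x u else ext y u.

Definition restr (S : {set Qd}) (z : Qd -> A) : conf S := [ffun u => z (val u)].

(* |x> (x) |y> for x on S and y on T, seen as a basis vector of U *)
Definition glue (U S T : {set Qd}) (x : conf S) (y : conf T) : conf U :=
  restr U (merge x y).

Definition glue_full (S T : {set Qd}) (x : conf S) (y : conf T) : word :=
  [ffun u => merge x y u].

Definition op (S : {set Qd}) := conf S -> conf S -> algC.
Definition full_op := word -> word -> algC.

Definition ptrace (T : {set Qd}) (rho : full_op) : op (~: T) :=
  fun a b => \sum_(z : conf T) rho (glue_full a z) (glue_full b z).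

(* A quantum channel from the qudits In to the qudits Out, in Kraus form:
   Kraus operators K k : H_In -> H_Out with sum_k K_k^dagger K_k = 1. *)
Definition is_channel (In Out : {set Qd}) (m : nat)
    (K : 'I_m -> conf Out -> conf In -> algC) : Prop :=
  forall a b : conf In,
    \sum_(k < m) \sum_(x : conf Out) (K k x a)^* * K k x b = (a == b)%:R.

(* (Chan (x) id_{~: Out}) applied to an operator sigma on the qudits
   Dom = In :|: ~: Out; the result is an operator on all qudits. *)
Definition chan_id (Dom In Out : {set Qd}) (m : nat)
    (K : 'I_m -> conf Out -> conf In -> algC) (sigma : op Dom) : full_op :=
  fun x y =>
    \sum_(k < m) \sum_(a : conf In) \sum_(b : conf In)
      K k (restr Out x) a
      * sigma (glue Dom a (restr (~: Out) x)) (glue Dom b (restr (~: Out) y))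
      * (K k (restr Out y) b)^*.

(* code states of a code (a subspace given by a predicate on vectors):
   density operators  sum_k |v_k><v_k|  with every v_k in the code
   (i.e. positive operators supported on the code space). *)
Definition code_state (inCode : (word -> algC) -> Prop) (psi : full_op) : Prop :=
  exists (m : nat) (v : 'I_m -> word -> algC),
    (forall k, inCode (v k)) /\
    forall x y, psi x y = \sum_(k < m) v k x * (v k y)^*.

Definition locally_recoverable (inCode : (word -> algC) -> Prop) (r : nat) : Prop :=
  forall i : Qd, exists I : {set Qd},
    [/\ i \in I, (#|I| <= r)%N &
      exists (m : nat) (K : 'I_m -> conf I -> conf (I :\ i) -> algC),
        is_channel K /\
        forall psi, code_state inCode psi ->
          forall x y : word,
            chan_id (Dom := ~: [set i]) K (ptrace (T := [set i]) psi) x y = psi x y].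

End Qudits.

Section TamoBarg.
Variable F : finFieldType.

Definition Fstar := {x : F | x != 0}.
Definition Fword := {ffun Fstar -> F}.

Definition TB_exp (q r l i : nat) : bool :=
  ((i < l) && (i %% r != r.-1))%N || ((i < q.-1) && (i %% r == 1))%N.

Definition TB_C (r l : nat) (w : Fword) : bool :=
  [exists c : {ffun 'I_#|F| -> F},
     [forall i : 'I_#|F|, ~~ TB_exp #|F| r l i ==> (c i == 0)] &&
     [forall u : Fstar, w u == (\sum_(i < #|F|) c i *: 'X^i : {poly F}).[val u]]].

Definition TB_Cperp (r l : nat) (y : Fword) : bool :=
  [forall w : Fword, TB_C r l w ==> (\sum_(u : Fstar) w u * y u == 0)].

(* CSS(C,C) = span { sum_{y in C^perp} |x + y> : x in C } *)
Definition TB_CSS (r l : nat) (v : Fword -> algC) : Prop :=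
  exists alpha : Fword -> algC,
    forall z : Fword,
      v z = \sum_(x : Fword | TB_C r l x)
              alpha x * \sum_(y : Fword | TB_Cperp r l y) (z == x + y)%:R.

End TamoBarg.

(* Main.v *)
Require Import Defs.
From HB Require Import structures.
From mathcomp Require Import all_boot all_order all_algebra all_field.
From mathcomp Require Import ring zify.
Set Implicit Arguments. Unset Strict Implicit. Unset Printing Implicit Defensive.
Import Order.TTheory GRing.Theory Num.Theory.
Local Open Scope ring_scope.

Section Conf.
Variables (Qd : finType) (F : finFieldType).
Local Notation ext0 := (@ext Qd F 0).

Lemma ext_inE (S : {set Qd}) (x : conf F S) u (Hu : u \in S) :
  ext0 x u = x (exist _ u Hu).
Proof. by rewrite /ext insubT. Qed.

Lemma ext_restr (S : {set Qd}) (w : Qd -> F) u : u \in S -> ext0 (restr S w) u = w u.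
Proof. by move=> Hu; rewrite (ext_inE _ Hu) ffunE. Qed.

Lemma ext_notin (S : {set Qd}) (x : conf F S) u : u \notin S -> ext0 x u = 0.
Proof. by move=> Hu; rewrite /ext insubF //; apply/negbTE. Qed.

Lemma conf_eq (S : {set Qd}) (x y : conf F S) :
  (forall u, u \in S -> ext0 x u = ext0 y u) -> x = y.
Proof.
move=> H; apply/ffunP => -[u Hu].
by have := H u Hu; rewrite !(ext_inE _ Hu).
Qed.

Lemma restr_eqP (S : {set Qd}) (w1 w2 : Qd -> F) :
  restr S w1 = restr S w2 <-> {in S, w1 =1 w2}.
Proof.
split=> [E u Hu|H].
  by rewrite -(ext_restr w1 Hu) -(ext_restr w2 Hu) E.
by apply/ffunP => -[u Hu]; rewrite !ffunE /= H.
Qed.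

End Conf.

Section Gen.
Variables (Qd : finType) (F : finFieldType).
Local Notation ext0 := (@ext Qd F 0).
Local Notation wd := {ffun Qd -> F}.
Variables (i : Qd) (I : {set Qd}) (h : wd).
Hypotheses (iI : i \in I) (hI : forall u, u \notin I -> h u = 0) (hi : h i != 0)
  (hh : \sum_u h u * h u = 0).

Definition dot (w : Qd -> F) := \sum_u h u * w u.
Definition shift (w : Qd -> F) (s : F) : wd := [ffun u => w u - s * h u].
Definition upd (w : Qd -> F) (t : F) : wd := [ffun u => if u == i then t else w u].
Definition fa (a : conf F (I :\ i)) := - (h i)^-1 * dot (ext0 a).
Definition Ew a s : wd := [ffun u => ext0 a u + (if u == i then fa a else 0) + s * h u].
Definition E a s : conf F I := restr I (Ew a s).

Lemma sum_delta (G : Qd -> F) : \sum_u (if u == i then G u else 0) = G i.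
Proof. by rewrite (bigD1 i) //= eqxx big1 ?addr0 // => u /negbTE ->. Qed.

Lemma dot_ext_restr (w : Qd -> F) : dot (ext0 (restr (I :\ i) w)) = dot w - h i * w i.
Proof.
apply/eqP; rewrite eq_sym subr_eq /dot -(sum_delta (fun u => h u * w u)) -big_split /=.
apply/eqP/eq_bigr => u _.
case: (u =P i) => [->|/eqP ui].
  by rewrite ext_notin ?setD11 // mulr0 add0r.
case uI: (u \in I); first by rewrite ext_restr ?addr0 // in_setD1 ui.
by rewrite hI ?uI // !mul0r addr0.
Qed.

Lemma dot_shift w s : dot (shift w s) = dot w.
Proof.
rewrite /dot; under eq_bigr => u _ do rewrite ffunE mulrBr.
by rewrite sumrB; under [X in _ - X]eq_bigr => u _ do rewrite mulrCA; rewrite -mulr_sumr hh mulr0 subr0.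
Qed.

Lemma dot_upd w t : dot (upd w t) = dot w - h i * w i + h i * t.
Proof.
have -> : dot (upd w t) = \sum_u (h u * w u + (if u == i then h i * (t - w i) else 0)).
  apply/eq_bigr => u _; rewrite ffunE; case: (u =P i) => [->|_]; last by rewrite addr0.
  by rewrite -mulrDr addrC subrK.
rewrite big_split sum_delta /=; rewrite /dot; ring.
Qed.

Lemma Ew_i a s : Ew a s i = fa a + s * h i.
Proof. by rewrite ffunE eqxx ext_notin ?setD11 // add0r. Qed.

Lemma E_i a s : ext0 (E a s) i = fa a + s * h i.
Proof. by rewrite ext_restr // Ew_i. Qed.

Lemma E_inj a b s : E a s = E b s -> a = b.
Proof.
move/restr_eqP => H; apply: conf_eq => u Hu.
have := H u (subsetP (subD1set I i) u Hu).
move: Hu; rewrite in_setD1 => /andP[/negbTE ui _].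
by rewrite !ffunE ui !addr0 => /addIr.
Qed.

Lemma fa_restr w : fa (restr (I :\ i) w) = - (h i)^-1 * (dot w - h i * w i).
Proof. by rewrite /fa dot_ext_restr. Qed.

Lemma E_char (x : Qd -> F) a s :
  (restr I x == E a s) = (dot x == 0) && (a == restr (I :\ i) (shift x s)).
Proof.
have key : forall a', a' = restr (I :\ i) (shift x s) ->
   (x i == fa a' + s * h i) = (dot x == 0).
  move=> a' ->; rewrite fa_restr dot_shift ffunE.
  have -> : - (h i)^-1 * (dot x - h i * (x i - s * h i)) + s * h i
            = x i - (h i)^-1 * dot x by field.
  apply/eqP/eqP => [H|->]; last by rewrite mulr0 subr0.
  have : x i - (x i - (h i)^-1 * dot x) == 0 by rewrite -H subrr.
  by rewrite opprB addrC subrK mulf_eq0 invr_eq0 (negbTE hi) /= => /eqP.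
apply/idP/idP.
  move/eqP/restr_eqP => HE.
  have Ha : a = restr (I :\ i) (shift x s).
    apply: conf_eq => u Hu; rewrite ext_restr // ffunE.
    have := HE u (subsetP (subD1set I i) u Hu).
    move: Hu; rewrite in_setD1 => /andP[/negbTE ui _].
    by rewrite ffunE ui addr0 => ->; rewrite addrK.
  rewrite -Ha eqxx andbT -(key a Ha).
  by apply/eqP; rewrite (HE i iI) Ew_i.
move=> /andP[d0 /eqP Ha]; apply/eqP/restr_eqP => u Hu.
case: (u =P i) => [->|/eqP ui].
  by rewrite Ew_i; apply/eqP; rewrite (key a Ha).
by rewrite ffunE (negbTE ui) addr0 Ha ext_restr ?in_setD1 ?ui // ffunE subrK.
Qed.


Definition kappa : algC := (sqrtC (#|F|%:R))^-1.
Definition Kr (k : 'I_#|F|) (X : conf F I) (a : conf F (I :\ i)) : algC :=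
  if X == E a ((ext0 X i - enum_val k) / h i) then kappa else 0.

Lemma kappa_conj : kappa^* = kappa.
Proof. by rewrite geC0_conj // invr_ge0 sqrtC_ge0 ler0n. Qed.

Lemma cardF_gt0 : (0 < #|F|)%N.
Proof. by apply/card_gt0P; exists 0. Qed.

Lemma kappa2 : kappa * kappa * #|F|%:R = 1.
Proof.
rewrite -expr2 exprVn sqrtCK mulVf // pnatr_eq0 -lt0n; exact: cardF_gt0.
Qed.

Lemma if_conj (P : bool) : (if P then kappa else 0)^* = if P then kappa else 0.
Proof. by case: P; rewrite ?kappa_conj ?conjC0. Qed.

Lemma sum_pred1_nat (T : finType) (e : T) : \sum_(X : T) ((X == e)%:R : algC) = 1.
Proof. by rewrite (bigD1 e) //= eqxx big1 ?addr0 // => X /negbTE ->. Qed.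

Lemma count_E a :
  \sum_(k < #|F|) \sum_(X : conf F I)
     ((X == E a ((ext0 X i - enum_val k) / h i))%:R : algC) = #|F|%:R.
Proof.
rewrite (reindex _ (onW_bij _ (enum_rank_bij F))) /=.
under eq_bigr => c _ do rewrite enum_rankK.
rewrite exchange_big /=.
transitivity (\sum_(X : conf F I) \sum_(s : F) ((X == E a s)%:R : algC)).
  apply: eq_bigr => X _.
  have bij : bijective (fun s : F => ext0 X i - s * h i).
    exists (fun c => (ext0 X i - c) / h i) => z.
      by rewrite opprB addrC subrK mulfK.
    by rewrite mulfVK // opprB addrC subrK.
  rewrite (reindex _ (onW_bij _ bij)) /=.
  by apply: eq_bigr => s _; rewrite opprB addrC subrK mulfK.
rewrite exchange_big /=.
under eq_bigr => s _ do rewrite sum_pred1_nat.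
by rewrite sumr_const.
Qed.

Lemma Kr_channel : is_channel Kr.
Proof.
move=> a b.
have step : forall k X, (Kr k X a)^* * Kr k X b =
   kappa * kappa * ((a == b)%:R * (X == E a ((ext0 X i - enum_val k) / h i))%:R).
  move=> k X; rewrite /Kr if_conj.
  case: (X =P E a _) => [Ea|nEa]; case: (X =P E b _) => [Eb|nEb].
  - by move: Eb; rewrite {1}Ea => /E_inj ->; rewrite eqxx !mulr1.
  - case: eqP => [ab|_]; last by rewrite !mul0r !mulr0.
    by subst b; case: nEb.
  - case: eqP => [ab|_]; last by rewrite !mul0r !mulr0.
    by subst b; case: nEa.
  - by rewrite !mulr0.
under eq_bigr => k _ do under eq_bigr => X _ do rewrite step.
under eq_bigr => k _ do rewrite -mulr_sumr -mulr_sumr.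
rewrite -mulr_sumr -mulr_sumr count_E.
case: (a == b); last by rewrite !mul0r mulr0.
by rewrite mul1r kappa2.
Qed.

Lemma sum_sel_l (T : finType) (P : T -> bool) (d : bool) (t0 : T) (G : T -> algC) :
  (forall t, P t = d && (t == t0)) ->
  \sum_t (if P t then kappa else 0) * G t = if d then kappa * G t0 else 0.
Proof.
move=> HP; case: d HP => HP.
  rewrite (bigD1 t0) //= HP eqxx big1 ?addr0 // => t /negbTE tn.
  by rewrite HP tn mul0r.
by rewrite big1 // => t _; rewrite HP mul0r.
Qed.

Lemma sum_sel_r (T : finType) (P : T -> bool) (d : bool) (t0 : T) (G : T -> algC) :
  (forall t, P t = d && (t == t0)) ->
  \sum_t G t * (if P t then kappa else 0)^* = if d then G t0 * kappa else 0.
Proof.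
move=> HP; under eq_bigr => t _ do rewrite if_conj mulrC.
by rewrite (sum_sel_l G HP); case: d HP => // _; rewrite mulrC.
Qed.

Lemma glue_calc (x : Qd -> F) (s : F) (z : conf F [set i]) :
  @glue_full Qd F 0 _ _ (@glue Qd F 0 (~: [set i]) _ _
      (restr (I :\ i) (shift x s)) (restr (~: I) x)) z
  = upd (shift x s) (ext0 z i).
Proof.
apply/ffunP => u; rewrite !ffunE /Defs.merge.
case: (u =P i) => [->|/eqP ui].
  by rewrite !inE eqxx.
rewrite !inE ui /= ext_restr ?inE ?ui // /Defs.merge.
case: ifP => H.
  have H' : u \in I :\ i := H.
  by rewrite ext_restr // ffunE.
have H' : (u \in I :\ i) = false := H.
move: H'; rewrite !inE ui /= => /negbT uI.
by rewrite ext_restr ?inE // hI // mulr0 subr0.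
Qed.

Lemma sum_conf1 (G : F -> algC) :
  \sum_(z : conf F [set i]) G (ext0 z i) = \sum_(t : F) G t.
Proof.
have bij : bijective (fun t : F => [ffun _ : {v | v \in [set i]} => t] : conf F [set i]).
  exists (fun z : conf F [set i] => ext0 z i) => [t|z].
    by rewrite (ext_inE _ (set11 i)) ffunE.
  apply/ffunP => -[v Hv]; rewrite ffunE.
  have := Hv; rewrite inE => /eqP Ev; subst v.
  by rewrite (ext_inE _ Hv).
rewrite (reindex _ (onW_bij _ bij)) /=.
by apply: eq_bigr => t _; rewrite (ext_inE _ (set11 i)) ffunE.
Qed.

Variable psi : full_op Qd F.
Hypothesis PT : forall (x y : {ffun Qd -> F}) s t, psi (shift x s) (shift y t) = psi x y.
Hypothesis PS1 : forall x y : {ffun Qd -> F}, dot x != 0 -> psi x y = 0.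
Hypothesis PS2 : forall x y : {ffun Qd -> F}, dot y != 0 -> psi x y = 0.

Lemma shift_i (x : {ffun Qd -> F}) c : shift x ((x i - c) / h i) i = c.
Proof. by rewrite ffunE mulfVK // opprB addrC subrK. Qed.

Lemma upd_id (w : {ffun Qd -> F}) : upd w (w i) = w.
Proof. by apply/ffunP => u; rewrite ffunE; case: (u =P i) => [->|]. Qed.

Lemma upd_shift (x : {ffun Qd -> F}) c :
  upd (shift x ((x i - c) / h i)) c = shift x ((x i - c) / h i).
Proof.
apply/ffunP => u; rewrite [in LHS]ffunE; case: (u =P i) => [->|//].
by rewrite shift_i.
Qed.

Lemma sigma_eval (x y : {ffun Qd -> F}) c : dot x = 0 -> dot y = 0 ->
  @ptrace Qd F 0 [set i] psi
    (@glue Qd F 0 (~: [set i]) _ _ (restr (I :\ i) (shift x ((x i - c) / h i))) (restr (~: I) x))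
    (@glue Qd F 0 (~: [set i]) _ _ (restr (I :\ i) (shift y ((y i - c) / h i))) (restr (~: I) y))
  = psi x y.
Proof.
move=> dx dy; rewrite /ptrace.
under eq_bigr => z _ do rewrite !glue_calc.
rewrite (sum_conf1 (fun t => psi (upd (shift x ((x i - c) / h i)) t)
                                (upd (shift y ((y i - c) / h i)) t))).
rewrite (bigD1 c) //= big1 ?addr0.
  by rewrite !upd_shift PT.
move=> t tc; apply: PS1.
rewrite dot_upd dot_shift dx shift_i sub0r addrC -mulrBr mulf_eq0 negb_or hi /=.
by rewrite subr_eq0.
Qed.

Lemma recover (x y : {ffun Qd -> F}) :
  @chan_id Qd F 0 (~: [set i]) (I :\ i) I #|F| Kr (@ptrace Qd F 0 [set i] psi) x y
  = psi x y.
Proof.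
rewrite /chan_id.
transitivity (\sum_(k < #|F|)
   (if (dot x == 0) && (dot y == 0) then kappa * kappa * psi x y else 0)).
  apply: eq_bigr => k _.
  rewrite /Kr !ext_restr //.
  under eq_bigr => a _ do rewrite (sum_sel_r _ (fun b => E_char y b _)).
  have ifm : forall (d : bool) (A B : algC), (if d then A * B * kappa else 0)
                = A * (if d then B * kappa else 0).
    by move=> [] A B; rewrite ?mulr0 ?mulrA.
  under eq_bigr => a _ do rewrite ifm.
  rewrite (sum_sel_l _ (fun a => E_char x a _)).
  case: (dot x =P 0) => dx; case: (dot y =P 0) => dy //=; rewrite ?mulr0 //.
  by rewrite sigma_eval // [psi x y * _]mulrC mulrA.
rewrite sumr_const card_ord.
case: (dot x =P 0) => dx; case: (dot y =P 0) => dy /=.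
- by rewrite -mulr_natr mulrAC kappa2 mul1r.
- by rewrite mul0rn PS2 //; apply/eqP.
- by rewrite mul0rn PS1 //; apply/eqP.
- by rewrite mul0rn PS1 //; apply/eqP.
Qed.

End Gen.

Lemma gen_recover (Qd : finType) (F : finFieldType) (i : Qd) (I : {set Qd}) (h : {ffun Qd -> F})
  (iI : i \in I) (hI : forall u, u \notin I -> h u = 0) (hi : h i != 0)
  (hh : \sum_u h u * h u = 0) (inCode : (word Qd F -> algC) -> Prop)
  (HT : forall v, inCode v -> forall (z : {ffun Qd -> F}) s, v (shift h z s) = v z)
  (HS : forall v, inCode v -> forall (z : {ffun Qd -> F}), dot h z != 0 -> v z = 0) :
  exists (m : nat) (K : 'I_m -> conf F I -> conf F (I :\ i) -> algC),
        is_channel K /\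
        forall psi, code_state inCode psi ->
          forall x y : word Qd F,
            @chan_id Qd F 0 (~: [set i]) _ _ _ K (@ptrace Qd F 0 [set i] psi) x y = psi x y.
Proof.
exists #|F|, (@Kr Qd F i I h); split; first exact: Kr_channel.
move=> psi [m [v [Hv Hpsi]]] x y.
apply: recover => //.
- by move=> x' y' s t; rewrite !Hpsi; apply: eq_bigr => k _; rewrite !HT.
- by move=> x' y' dx; rewrite Hpsi big1 // => k _; rewrite (HS _ (Hv k) x') // mul0r.
- by move=> x' y' dy; rewrite Hpsi big1 // => k _; rewrite (HS _ (Hv k) y') // conjC0 mulr0.
Qed.

Section FF.
Variable F : finFieldType.

Lemma cardF_gt0' : (0 < #|F|)%N.
Proof. by apply/card_gt0P; exists 0. Qed.

Lemma natr_card : (#|F|%:R : F) = 0.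
Proof.
have : \sum_(x : F) x = \sum_(x : F) (x + 1).
  by rewrite (reindex_inj (addIr (1 : F))).
rewrite big_split /= sumr_const => /eqP; rewrite -subr_eq0 opprD addrA subrr sub0r oppr_eq0.
by move/eqP.
Qed.

Lemma natr_n : ((#|F|.-1)%:R : F) = -1.
Proof.
apply/eqP; rewrite -subr_eq0 opprK natr1 prednK ?natr_card //; exact: cardF_gt0'.
Qed.

Lemma expf_n (x : F) : x != 0 -> x ^+ #|F|.-1 = 1.
Proof.
move=> x0; apply: (mulfI x0); rewrite mulr1 -exprS prednK ?expf_card //; exact: cardF_gt0'.
Qed.

Lemma card_Fstar : #|{: Fstar F}| = #|F|.-1.
Proof. by rewrite card_sig -(cardC1 (0 : F)); apply: eq_card => x; rewrite !inE. Qed.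

Lemma expf_mod (x : F) N : x != 0 -> x ^+ N = x ^+ (N %% #|F|.-1).
Proof.
move=> x0; rewrite {1}(divn_eq N #|F|.-1) exprD exprM.
by rewrite exprAC expf_n // expr1n mul1r.
Qed.

Lemma power_sum N : ~~ (#|F|.-1 %| N)%N -> \sum_(u : Fstar F) (val u) ^+ N = 0.
Proof.
move=> nN.
set n := #|F|.-1.
set N' := (N %% n)%N.
have N'0 : (0 < N')%N by rewrite lt0n; move: nN; rewrite /dvdn.
have n0 : (0 < n)%N by rewrite /n -card_Fstar; apply/card_gt0P; exists (exist _ 1 (oner_neq0 F)).
have N'n : (N' < n)%N by rewrite ltn_mod.
have [g gN] : exists g : Fstar F, val g ^+ N' != 1.
  apply/existsP; rewrite -negb_forall; apply/negP => /forallP Hall.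
  have H1 : all (root ('X^N' - 1)) (map val (enum {: Fstar F})).
    by apply/allP => x /mapP [u _ ->]; rewrite /root !hornerE (eqP (Hall u)) subrr.
  have H2 : uniq (map val (enum {: Fstar F})).
    by rewrite map_inj_uniq ?enum_uniq //; exact: val_inj.
  have H0 : ('X^N' - 1 : {poly F}) != 0 by rewrite -size_poly_eq0 size_XnsubC.
  have := max_poly_roots H0 H1 H2.
  by rewrite size_XnsubC // size_map -cardE card_Fstar -/n ltnS leqNgt N'n.
have mulinj : injective (fun u : Fstar F => (exist _ (val g * val u) (mulf_neq0 (valP g) (valP u)) : Fstar F)).
  by move=> u v /(congr1 val) /= /(mulfI (valP g)) /val_inj.
have E : \sum_(u : Fstar F) (val u) ^+ N = \sum_(u : Fstar F) (val u) ^+ N'.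
  by apply: eq_bigr => u _; rewrite expf_mod ?(valP u).
rewrite E; apply/eqP.
have := erefl (\sum_(u : Fstar F) (val u) ^+ N').
rewrite {2}(reindex_inj mulinj) /=.
under eq_bigr => u _ do rewrite exprMn.
rewrite -mulr_sumr => /eqP; rewrite -subr_eq0 -{1}(mul1r (\sum_u _)) -mulrBl.
by rewrite mulf_eq0 subr_eq0 eq_sym (negbTE gN).
Qed.

End FF.

Section TB.
Variables (F : finFieldType) (r l : nat).
Hypotheses (Hr : (r %| #|F|.-1)%N) (r3 : (3 <= r)%N).
Local Notation n := #|F|.-1.
Local Notation m := (#|F|.-1 %/ r)%N.

Lemma nm : n = (m * r)%N.
Proof. by rewrite divnK. Qed.

Lemma m_neq0 : (m%:R : F) != 0.
Proof.
apply/eqP => m0; have := natr_n F.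
rewrite nm natrM m0 mul0r => /eqP; rewrite eq_sym oppr_eq0 oner_eq0.
by [].
Qed.

Lemma NT a k : TB_exp #|F| r l a -> (k %% r == 1)%N -> ~~ (n %| a + k)%N.
Proof.
move=> Ha Hk; apply/negP => nd.
have rd : (r %| a + k)%N := dvdn_trans Hr nd.
have : (r %| (a %% r).+1)%N.
  by rewrite -addn1 -(eqP Hk) /dvdn modnDm.
move/(dvdn_leq (ltn0Sn _)) => le1.
have lt1 : (a %% r < r)%N by rewrite ltn_mod; lia.
move: Ha le1 lt1; rewrite /TB_exp; set t := (a %% r)%N.
case/orP => /andP [_ /eqP H]; lia.
Qed.

Variable i : Fstar F.
Local Notation beta := (val i ^+ r).
Local Notation gam := (beta^-1).

Lemma beta_neq0 : beta != 0.
Proof. by rewrite expf_neq0 // (valP i). Qed.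

Definition Ppoly : {poly F} := \sum_(j < m) (gam ^+ j) *: 'X^(r * j + 1).

Lemma P_horner x : Ppoly.[x] = x * \sum_(j < m) (gam * x ^+ r) ^+ j.
Proof.
rewrite horner_sum mulr_sumr; apply: eq_bigr => j _.
by rewrite hornerZ hornerXn exprMn addn1 exprSr exprM; ring.
Qed.

Lemma P_coef k : Ppoly`_k != 0 -> (k %% r == 1)%N && (k < n)%N.
Proof.
apply: contraR => Hk; rewrite coef_sumMXn big1 // => j /eqP Ej.
exfalso; move/negP: Hk; apply; rewrite -Ej.
rewrite mulnC modnMDl modn_small; last lia.
rewrite eqxx /=.
have jm : (j < m)%N := ltn_ord j.
move: (nat_of_ord j) jm nm => jj.
move: (#|F|.-1 %/ r)%N => M; move: (#|F|.-1) => N; nia.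
Qed.

Definition hw : Fword F := [ffun u => Ppoly.[val u]].
Definition Iset : {set Fstar F} := [set u | val u ^+ r == beta].

Lemma hw_out u : u \notin Iset -> hw u = 0.
Proof.
rewrite inE => nu; rewrite ffunE P_horner.
set w := gam * val u ^+ r.
have w1 : w != 1.
  apply: contra nu => /eqP w1; apply/eqP.
  by rewrite -(mulVKf beta_neq0 (val u ^+ r)) -/w w1 mulr1.
have wm : w ^+ m = 1.
  rewrite /w exprMn -exprM mulnC -nm expf_n ?(valP u) // mulr1 exprVn -exprM mulnC -nm.
  by rewrite expf_n ?(valP i) // invr1.
have := subrX1 w m; rewrite wm subrr => /esym /eqP.
by rewrite mulf_eq0 subr_eq0 (negbTE w1) /= => /eqP ->; rewrite mulr0.
Qed.

Lemma hw_i : hw i != 0.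
Proof.
rewrite ffunE P_horner mulVf ?beta_neq0 //.
under eq_bigr do rewrite expr1n.
by rewrite sumr_const card_ord mulf_neq0 ?m_neq0 ?(valP i).
Qed.

Lemma card_I : (#|Iset| <= r)%N.
Proof.
have H1 : all (root ('X^r - beta%:P)) (map val (enum Iset)).
  apply/allP => x /mapP [u]; rewrite mem_enum inE => /eqP Hu ->.
  by rewrite /root !hornerE Hu subrr.
have H2 : uniq (map val (enum Iset)).
  by rewrite map_inj_uniq ?enum_uniq //; exact: val_inj.
have r0 : (0 < r)%N by lia.
have H0 : ('X^r - beta%:P : {poly F}) != 0 by rewrite -size_poly_eq0 size_XnsubC.
have := max_poly_roots H0 H1 H2.
by rewrite size_XnsubC // size_map -cardE ltnS.
Qed.

Lemma hw_C : TB_C r l hw.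
Proof.
apply/existsP; exists [ffun k : 'I_#|F| => Ppoly`_k]; apply/andP; split.
  apply/forallP => k; apply/implyP; rewrite ffunE.
  apply: contraNT => /P_coef /andP [k1 kn].
  by rewrite /TB_exp k1 kn orbT.
have -> : \sum_(k < #|F|) [ffun k : 'I_#|F| => Ppoly`_k] k *: 'X^k = Ppoly.
  under eq_bigr do rewrite ffunE.
  rewrite -poly_def; apply/polyP => k; rewrite coef_poly.
  case: ltnP => // kq; apply/esym/eqP; apply: contraTT kq => /P_coef /andP [_ kn].
  by rewrite -ltnNge; apply: (leq_trans kn); rewrite leq_pred.
by apply/forallP => u; rewrite ffunE.
Qed.

Lemma hw_Cperp : TB_Cperp r l hw.
Proof.
apply/forallP => w; apply/implyP => /existsP [c /andP [/forallP c0 /forallP cw]].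
rewrite (eq_bigr (fun u => \sum_(a < #|F|) \sum_(k < size Ppoly)
            (c a * Ppoly`_k) * (val u) ^+ (a + k))); last first.
  move=> u _; rewrite (eqP (cw u)) ffunE horner_sum horner_coef mulr_suml.
  apply: eq_bigr => a _; rewrite hornerZ hornerXn mulr_sumr.
  by apply: eq_bigr => k _; rewrite exprD mulrACA.
rewrite exchange_big /=.
under eq_bigr => a _ do rewrite exchange_big /=.
apply/eqP; apply: big1 => a _; apply: big1 => k _.
rewrite -mulr_sumr.
case: (c a =P 0) => [->|ca]; first by rewrite !mul0r.
case: (Ppoly`_k =P 0) => [->|pk]; first by rewrite mulr0 mul0r.
rewrite power_sum ?mulr0 //; apply: NT.
  by move: (c0 a); case: TB_exp => //= /eqP /ca.
by case/andP: (P_coef (introN eqP pk)).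
Qed.

Lemma hh : \sum_u hw u * hw u = 0.
Proof. by apply/eqP; exact: (implyP (forallP hw_Cperp hw) hw_C). Qed.

Lemma Cperp_addr (y y' : Fword F) :
  TB_Cperp r l y' -> TB_Cperp r l (y + y') = TB_Cperp r l y.
Proof.
move=> /forallP H'; apply: eq_forallb => w.
case Cw: (TB_C r l w) => //=.
have H0 := implyP (H' w) Cw.
under eq_bigr do rewrite ffunE mulrDr.
by rewrite big_split /= (eqP H0) addr0.
Qed.

Lemma Cperp_scal t : TB_Cperp r l [ffun u => t * hw u].
Proof.
apply/forallP => w; apply/implyP => Cw.
have H0 := implyP (forallP hw_Cperp w) Cw.
under eq_bigr do rewrite ffunE mulrCA.
by rewrite -mulr_sumr (eqP H0) mulr0.
Qed.

Lemma HT v : TB_CSS r l v -> forall (z : Fword F) s, v (shift hw z s) = v z.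
Proof.
move=> [al Hv] z s; rewrite !Hv; apply: eq_bigr => x _; congr (_ * _).
set d : Fword F := [ffun u => - s * hw u].
have -> : shift hw z s = z + d by apply/ffunP => u; rewrite !ffunE mulNr.
rewrite (reindex_inj (addIr d)) /=.
apply: eq_big => y; first by rewrite Cperp_addr // Cperp_scal.
by rewrite addrA (inj_eq (addIr d)).
Qed.

Lemma HS v : TB_CSS r l v -> forall (z : Fword F), dot hw z != 0 -> v z = 0.
Proof.
move=> [al Hv] z dz; rewrite Hv big1 // => x Cx; rewrite big1 ?mulr0 // => y Cy.
case: eqP => // Ez; exfalso; move: dz; rewrite Ez /dot.
under eq_bigr => u _ do rewrite [X in _ * X]ffunE mulrDr.
rewrite big_split /=.
have H1 := implyP (forallP hw_Cperp x) Cx.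
have H2 := implyP (forallP Cy hw) hw_C.
under eq_bigr do rewrite mulrC.
by rewrite (eqP H1) (eqP H2) addr0 eqxx.
Qed.

End TB.

Unset Implicit Arguments.
Set Strict Implicit.

Theorem corollary5p8 (F : finFieldType) (r l : nat) :
  (r %| #|F|.-1)%N -> (3 <= r)%N ->
  (#|F| <= 2 * l)%N -> (l <= #|F|.-1)%N ->
  @locally_recoverable (Fstar F) F 0 (@TB_CSS F r l) r.
Proof.
move=> Hr r3 _ _ i.
exists (Iset r i); split; first by rewrite inE.
  exact: card_I.
apply: (@gen_recover _ _ i (Iset r i) (hw r i)).
- by rewrite inE.
- exact: hw_out.
- exact: hw_i.
- exact: hh.
- exact: HT.
- exact: HS.
Qed.
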